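(* Let $n\ge4$ and $\mathcal G\in\mathbb G^n_S$, with orthogonal decomposition $\mathcal G=\mathcal G_{cpi}+\mathcal G_{cyclic}$. Then $\mathcal G_{cpi}$ has edge weights $\omega_j+\omega_k$ where $$\omega_j=\frac1{n-2}\Big[S_S(V_j)-\tfrac12T(\mathcal G)\Big],\qquad j=1,\dots,n,$$ and $T(\mathcal G)=T(\mathcal G_{cpi})=2\sum_{j=1}^n\omega_j$. Moreover, the length in $\mathcal G$ of every Hamiltonian circuit equals $T(\mathcal G)$ plus its length in $\mathcal G_{cyclic}=\mathcal G-\mathcal G_{cpi}$.
   Context: $\mathbb G^n_S$ is the space of complete undirected weighted graphs without loops on $V_1,\dots,V_n$ with edge weights $d_{i,j}=d_{j,i}$, identified with $\mathbb R^{\binom n2}$ with the standard inner product. $\mathbb{CPI}^n_S$ is the subspace of graphs with $d_{j,k}=\omega_j+\omega_k$ for some reals $\omega_j$; $\mathbb C^n_S$ is its orthogonal complement; $\mathcal G_{cpi},\mathcal G_{cyclic}$ are the orthogonal projections of $\mathcal G$ onto these. $S_S(V_j)=\sum_{k\ne j}d_{j,k}$ and $T(\mathcal G)=\frac1{n-1}\sum_{j=1}^nS_S(V_j)$. A Hamiltonian circuit is a closed path visiting every vertex exactly once; its length is the sum of its edge weights. *)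

(* Defs.v *)
From HB Require Import structures.
From mathcomp Require Import all_boot all_order all_algebra.
Set Implicit Arguments. Unset Strict Implicit. Unset Printing Implicit Defensive.
Import Order.TTheory GRing.Theory Num.Theory.
Local Open Scope ring_scope.

(* A complete undirected weighted graph without loops on vertices 'I_n is
   a weight function d : 'I_n -> 'I_n -> R, required to be symmetric;
   diagonal values d i i are ignored everywhere (no loops). *)
Definition wgraph (R : realFieldType) (n : nat) := 'I_n -> 'I_n -> R.

Definition symmetric_graph (R : realFieldType) (n : nat) (d : wgraph R n) : Prop :=
  forall j k : 'I_n, d j k = d k j.

Definition ginner (R : realFieldType) (n : nat) (d e : wgraph R n) : R :=
  \sum_(j < n) \sum_(k < n | (j < k)%N) d j k * e j k.

Definition is_cpi (R : realFieldType) (n : nat) (d : wgraph R n) : Prop :=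
  exists w : 'I_n -> R, forall j k : 'I_n, j != k -> d j k = w j + w k.

Definition vsum (R : realFieldType) (n : nat) (d : wgraph R n) (j : 'I_n) : R :=
  \sum_(k < n | k != j) d j k.

Definition Ttot (R : realFieldType) (n : nat) (d : wgraph R n) : R :=
  (n.-1)%:R^-1 * \sum_(j < n) vsum d j.

(* A Hamiltonian circuit is given by the cyclic sequence s of its vertices,
   visiting every vertex exactly once. *)
Definition hamiltonian (n : nat) (s : seq 'I_n) : Prop :=
  uniq s /\ size s = n.

Definition circuit_length (R : realFieldType) (n : nat) (d : wgraph R n)
  (s : seq 'I_n) : R :=
  \sum_(p <- zip s (rot 1 s)) d p.1 p.2.

(* Main.v *)
Require Import Defs.
From HB Require Import structures.
From mathcomp Require Import all_boot all_order all_algebra.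
From mathcomp Require Import ring.
Import Order.TTheory GRing.Theory Num.Theory.
Local Open Scope ring_scope.

Lemma vsum_cyc0 (R : realFieldType) (n : nat) (g : wgraph R n) (m : 'I_n) :
  symmetric_graph g ->
  (forall H : wgraph R n, symmetric_graph H -> is_cpi H -> ginner g H = 0) ->
  vsum g m = 0.
Proof.
move=> sg orth.
pose H : wgraph R n := fun j k => (j == m)%:R + (k == m)%:R.
have h' : \sum_(j < n) \sum_(k < n | (j < k)%N)
     g j k * ((j == m)%:R + (k == m)%:R) = 0.
  apply: (orth H); first by move=> j k; rewrite /H addrC.
  by exists (fun j => (j == m)%:R).
have eA : \sum_(j < n) \sum_(k < n | (j < k)%N) g j k * (j == m)%:R
     = \sum_(k < n | (m < k)%N) g m k.
  rewrite (bigD1 m) //= [X in _ + X]big1 ?addr0; last first.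
    by move=> j jm; apply: big1 => k _; rewrite (negbTE jm) mulr0.
  by apply: eq_bigr => k _; rewrite eqxx mulr1.
have eB : \sum_(j < n) \sum_(k < n | (j < k)%N) g j k * (k == m)%:R
     = \sum_(k < n | (k < m)%N) g m k.
  under eq_bigr do rewrite big_mkcond /=.
  rewrite exchange_big /= (bigD1 m) //= [X in _ + X]big1 ?addr0; last first.
    by move=> k km; apply: big1 => j _; rewrite (negbTE km) mulr0; case: ifP.
  rewrite [RHS]big_mkcond /=; apply: eq_bigr => j _.
  by rewrite eqxx mulr1 sg; case: ifP.
rewrite -{}h'.
under eq_bigr do under eq_bigr do rewrite mulrDr.
under eq_bigr do rewrite big_split /=.
rewrite big_split /= eA eB.
rewrite /vsum (bigID (fun k : 'I_n => (m < k)%N)) /=.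
congr (_ + _); apply: eq_bigl => k.
  by rewrite -val_eqE /=; case: ltngtP.
by rewrite -val_eqE /=; case: ltngtP.
Qed.

Lemma zip_neq (T : eqType) (t : seq T) x y :
  uniq (x :: t) -> last x t != y -> all (fun p => p.1 != p.2) (zip (x :: t) (rcons t y)).
Proof.
elim: t x => [|a t IH] x /=; first by rewrite andbT.
move=> /andP [xat /andP [ant ut]] ly.
rewrite IH ?andbT /= ?ant //.
by apply: contraNneq xat => ->; rewrite mem_head.
Qed.

Lemma ham_neq (n : nat) (s : seq 'I_n) : (2 <= n)%N -> hamiltonian s ->
  all (fun p => p.1 != p.2) (zip s (rot 1 s)).
Proof.
move=> n2 [us ss]; case: s us ss => [|x t] us ss; first by rewrite -ss in n2.
rewrite rot1_cons; apply: zip_neq => //.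
case: t us ss => [|a t] us ss; first by rewrite -ss in n2.
move: us => /= /andP [xat _].
rewrite /=; apply/eqP => e; move: xat; by rewrite -{1}e mem_last.
Qed.

Lemma sum_ham (R : realFieldType) (n : nat) (s : seq 'I_n) (u : 'I_n -> R) :
  hamiltonian s -> \sum_(x <- s) u x = \sum_(j < n) u j.
Proof.
move=> [us ss].
have szl : (size (enum 'I_n) <= size s)%N by rewrite size_enum_ord ss.
have [_ eqs] := @uniq_min_size _ s (enum 'I_n) us (fun x _ => mem_enum _ x) szl.
rewrite (perm_big (enum 'I_n)); first by rewrite big_enum.
by apply: uniq_perm => //; apply: enum_uniq.
Qed.

Lemma circ_cpi (R : realFieldType) (n : nat) (s : seq 'I_n) (u : 'I_n -> R) :
  hamiltonian s ->
  \sum_(p <- zip s (rot 1 s)) (u p.1 + u p.2) = 2 * \sum_(j < n) u j.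
Proof.
move=> hs; rewrite big_split /=.
rewrite -(big_map (fun p => p.1) xpredT u) -(big_map (fun p => p.2) xpredT u).
have -> : [seq p.1 | p <- zip s (rot 1 s)] = s by apply: unzip1_zip; rewrite size_rot.
have -> : [seq p.2 | p <- zip s (rot 1 s)] = rot 1 s by apply: unzip2_zip; rewrite size_rot.
rewrite [X in _ + X](perm_big s) ?perm_rot // (@sum_ham R n s u hs).
by rewrite -mulr2n mulr_natl.
Qed.

Theorem theorem12 (R : realFieldType) (n : nat) (Hn : (4 <= n)%N)
  (G Gcpi Gcyc : wgraph R n) :
  symmetric_graph G -> symmetric_graph Gcpi -> symmetric_graph Gcyc ->
  (* orthogonal decomposition G = G_cpi + G_cyclic *)
  (forall j k : 'I_n, j != k -> G j k = Gcpi j k + Gcyc j k) ->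
  is_cpi Gcpi ->
  (forall H : wgraph R n, symmetric_graph H -> is_cpi H -> ginner Gcyc H = 0) ->
  let w := fun j : 'I_n => (n - 2)%:R^-1 * (vsum G j - Ttot G / 2) in
  (forall j k : 'I_n, j != k -> Gcpi j k = w j + w k) /\
  Ttot G = Ttot Gcpi /\ Ttot Gcpi = 2 * \sum_(j < n) w j /\
  (forall s : seq 'I_n, hamiltonian s ->
     circuit_length G s = Ttot G + circuit_length Gcyc s).
Proof.
move=> sG sCpi sCyc dec [u hu] orth w.
set U := \sum_(j < n) u j.
have n2 : (2 <= n)%N by apply: leq_trans Hn.
set a : R := (n - 2)%:R.
have a0 : a != 0 by rewrite /a pnatr_eq0 -lt0n subn_gt0; apply: leq_trans Hn.
have a1 : a + 1 != 0.
  by rewrite /a natr1 pnatr_eq0.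
have en1 : (n.-1)%:R = a + 1 :> R.
  by rewrite /a natr1; congr (_%:R); rewrite -subn1 -subSn //; apply: leq_trans n2.
have en : n%:R = a + 2 :> R.
  by rewrite /a -[2]/(2%:R) -natrD subnK.
have cyc0 m : vsum Gcyc m = 0 := @vsum_cyc0 R n Gcyc m sCyc orth.
have vcpi m : vsum Gcpi m = a * u m + U.
  rewrite /vsum (eq_bigr (fun k => u m + u k)); last first.
    by move=> k km; rewrite hu // eq_sym.
  rewrite big_split /= sumr_const cardC1 card_ord /U [in RHS](bigD1 m) //=.
  by rewrite -mulr_natr en1; ring.
have vG m : vsum G m = vsum Gcpi m.
  rewrite /vsum (eq_bigr (fun k => Gcpi m k + Gcyc m k)); last first.
    by move=> k km; rewrite dec // eq_sym.
  by rewrite big_split /=; have := cyc0 m; rewrite /vsum => ->; rewrite addr0.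
have TT : Ttot Gcpi = 2 * U.
  rewrite /Ttot (eq_bigr _ (fun m _ => vcpi m)) big_split /= -big_distrr /=.
  rewrite sumr_const card_ord en1 -[U *+ n]mulr_natr en -/U.
  by field.
have TG : Ttot G = Ttot Gcpi.
  by rewrite /Ttot; congr (_ * _); apply: eq_bigr => m _; apply: vG.
have wu j : w j = u j.
  by rewrite /w vG vcpi TG TT -/a; field.
split; first by move=> j k jk; rewrite hu // !wu.
split; first done.
split; first by rewrite TT; congr (_ * _); apply: eq_bigr => j _; rewrite wu.
move=> s hs.
rewrite /circuit_length TG TT -(@circ_cpi R n s u hs) -big_split /=.
rewrite big_seq [RHS]big_seq; apply: eq_bigr => p pin.
have /= neq := allP (@ham_neq n s n2 hs) p pin.
by rewrite dec // hu.
Qed.
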